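(* Let $d\ge1$ and let $\{e_j\}_{j=1}^d$ be an orthonormal basis of $\mathbb C^d$. There is a map $F:\mathbb R^{3d-2}\to\mathbb C^d$ (depending on the basis) such that for every $x\in\mathbb C^d$ which is full with respect to $\{e_j\}_{j=1}^d$, $$F\big(\mathcal A_{\{e_j\}}(x)\big)=\frac{\langle e_1,x\rangle}{|\langle e_1,x\rangle|}\,x .$$ That is, the vector $y=\frac{\langle e_1,x\rangle}{|\langle e_1,x\rangle|}x$ is determined by the values $\mathcal A_{\{e_j\}}(x)$.
   Context: $\mathbb C^d$ carries the standard inner product $\langle u,v\rangle=\sum_k u_k\overline{v_k}$. A vector $x$ is called full with respect to a basis $\{e_j\}_{j=1}^d$ if $\langle x,e_j\rangle\ne0$ for all $j$. The measurement vectors are $f_j=e_j$ for $1\le j\le d$, $f_j=e_{j-d}-e_{j-d+1}$ for $d+1\le j\le 2d-1$, and $f_j=e_{j-(2d-1)}-ie_{j-(2d-1)+1}$ for $2d\le j\le 3d-2$; the magnitude measurement map is $\mathcal A_{\{e_j\}}(x)=(|\langle x,f_j\rangle|^2)_{j=1}^{3d-2}\in\mathbb R^{3d-2}$. *)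

(* Defs.v *)
From HB Require Import structures.
From mathcomp Require Import all_boot all_order all_algebra.
From mathcomp Require Import complex.
From mathcomp Require Import reals.
Set Implicit Arguments.
Unset Strict Implicit.
Unset Printing Implicit Defensive.
Import Order.TTheory GRing.Theory Num.Theory.
Local Open Scope ring_scope.

Definition cinner (R : rcfType) (d : nat) (u v : 'cV[R[i]]_d) : R[i] :=
  \sum_(k < d) u k 0 * (v k 0)^*.

Definition full (R : rcfType) (d : nat) (e : 'I_d -> 'cV[R[i]]_d) (x : 'cV[R[i]]_d) :=
  forall j, cinner x (e j) != 0.

(* orthonormal basis (d orthonormal vectors in C^d form a basis) *)
Definition orthonormal_basis (R : rcfType) (d : nat) (e : 'I_d -> 'cV[R[i]]_d) :=
  forall j k, cinner (e j) (e k) = (j == k)%:R.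

(* measurement vectors f_1..f_{3d-2}, 0-indexed: index m < 3d-2.
   m < d            : e_{m}
   d <= m < 2d-1    : e_{m-d} - e_{m-d+1}
   2d-1 <= m        : e_{m-(2d-1)} - i e_{m-(2d-1)+1}  *)
Definition meas_vec (R : rcfType) (d : nat) (e : 'I_d -> 'cV[R[i]]_d)
  (m : 'I_(3 * d - 2)) : 'cV[R[i]]_d :=
  let E := fun n : nat => if insub n is Some j then e j else 0 in
  if (m < d)%N then E m
  else if (m < 2 * d - 1)%N then E (m - d)%N - E (m - d).+1
  else E (m - (2 * d - 1))%N - 'i *: E (m - (2 * d - 1)).+1.

Definition sqmod (R : rcfType) (z : R[i]) : R := complex.Re z ^+ 2 + complex.Im z ^+ 2.

Definition meas_map (R : rcfType) (d : nat) (e : 'I_d -> 'cV[R[i]]_d)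
  (x : 'cV[R[i]]_d) : 'cV[R]_(3 * d - 2) :=
  \col_m sqmod (cinner x (meas_vec e m)).

(* Main.v *)
Require Import Defs.
From HB Require Import structures.
From mathcomp Require Import all_boot all_order all_algebra.
From mathcomp Require Import complex.
From mathcomp Require Import reals.
From mathcomp Require Import ring zify.
From Stdlib Require Import ClassicalEpsilon.
Import Order.TTheory GRing.Theory Num.Theory.
Local Open Scope ring_scope.

Lemma polyid (K : comRingType) (u v U V i : K) :
  u*V + u*V - ((u*U + v*V - (u-v)*(U-V)) + i*((u + i * v)*(U + (- i)*V) - u*U - v*V))
  = (i^+2+1)*(u*V - U*v + i*(v*V)).
Proof. ring. Qed.

Section S.
Variable C : numClosedFieldType.

Lemma cD (x y : C) : (x + y)^* = x^* + y^*. Proof. exact: rmorphD. Qed.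
Lemma cB (x y : C) : (x - y)^* = x^* - y^*. Proof. exact: rmorphB. Qed.
Lemma cM (x y : C) : (x * y)^* = x^* * y^*. Proof. exact: rmorphM. Qed.

Lemma Wlem (a b a' b' : C) :
  a * a^* = a' * a'^* -> b * b^* = b' * b'^* ->
  (a - b) * (a - b)^* = (a' - b') * (a' - b')^* ->
  (a + 'i * b) * (a + 'i * b)^* = (a' + 'i * b') * (a' + 'i * b')^* ->
  a * b^* = a' * b'^*.
Proof.
move=> h1 h2 h3 h4.
have key : forall u v : C, u * v^* *+ 2 =
   (u * u^* + v * v^* - (u - v) * (u - v)^*)
   + 'i * ((u + 'i * v) * (u + 'i * v)^* - u * u^* - v * v^*).
  move=> u v; rewrite cB cD cM conjCi mulr2n.
  apply/eqP; rewrite -subr_eq0; apply/eqP.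
  by rewrite polyid sqrCi addNr mul0r.
have : (a * b^*) *+ 2 = (a' * b'^*) *+ 2.
  by rewrite (key a b) (key a' b') h1 h2 h3 h4.
rewrite -(mulr_natr (a * b^*)) -(mulr_natr (a' * b'^*)).
by apply: mulIf; rewrite pnatr_eq0.
Qed.
End S.

Section M.
Variable R : rcfType.
Variable d : nat.
Variable e : 'I_d -> 'cV[R[i]]_d.
Hypothesis he : orthonormal_basis e.

Lemma sumE (F G : 'I_d -> R[i]) : (forall k, F k = G k) -> \sum_k F k = \sum_k G k.
Proof. by move=> FG; apply: eq_bigr => k _; apply: FG. Qed.

Lemma cinnerBl (u v w : 'cV[R[i]]_d) : cinner (u - v) w = cinner u w - cinner v w.
Proof. by rewrite /cinner -sumrB; apply: eq_bigr => k _; rewrite !mxE mulrBl. Qed.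

Lemma cinnerBr (u v w : 'cV[R[i]]_d) : cinner u (v - w) = cinner u v - cinner u w.
Proof. by rewrite /cinner -sumrB; apply: eq_bigr => k _; rewrite !mxE cB mulrBr. Qed.

Lemma cinnerZl a (u w : 'cV[R[i]]_d) : cinner (a *: u) w = a * cinner u w.
Proof. by rewrite /cinner mulr_sumr; apply: eq_bigr => k _; rewrite !mxE mulrA. Qed.

Lemma cinnerZr a (u w : 'cV[R[i]]_d) : cinner u (a *: w) = a^* * cinner u w.
Proof. by rewrite /cinner mulr_sumr; apply: eq_bigr => k _; rewrite !mxE cM mulrCA. Qed.

Lemma cinnerC (u w : 'cV[R[i]]_d) : cinner u w = (cinner w u)^*.
Proof.
rewrite /cinner rmorph_sum; apply: sumE => k /=.
by rewrite rmorphM /= conjCK mulrC.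
Qed.

Lemma recon (u v : 'cV[R[i]]_d) :
  (forall j, cinner u (e j) = cinner v (e j)) -> u = v.
Proof.
move=> h.
pose E : 'M[R[i]]_d := \matrix_(i, j) e j i 0.
pose Ec : 'M[R[i]]_d := \matrix_(i, j) (e j i 0)^*.
have h1 : E^T *m Ec = 1%:M.
  apply/matrixP => j k; rewrite !mxE -he /cinner.
  by apply: sumE => m; rewrite !mxE.
have h2 := mulmx1C h1.
have h3 : (u - v)^T *m Ec = 0.
  apply/matrixP => j k; rewrite !mxE.
  transitivity (cinner (u - v) (e k)); last first.
    rewrite cinnerBl h subrr; reflexivity.
  by rewrite /cinner; apply: sumE => m; rewrite !mxE (ord1 j).
have h4 : (u - v)^T = 0 by rewrite -[(u - v)^T]mulmx1 -h2 mulmxA h3 mul0mx.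
move/(congr1 trmx): h4; rewrite trmxK trmx0 => /eqP; rewrite subr_eq0 => /eqP //.
Qed.
End M.

Section P.
Variable R : rcfType.
Variable d : nat.
Variable e : 'I_d -> 'cV[R[i]]_d.

Lemma sqmodC (z : R[i]) : (sqmod z)%:C%C = z * z^*.
Proof.
rewrite -normCK normc_def -rmorphXn /= sqr_sqrtr //.
by rewrite addr_ge0 // sqr_ge0.
Qed.

Lemma insE n (h : (n < d)%N) :
  (if insub n is Some j then e j else 0) = e (Ordinal h).
Proof. by rewrite insubT. Qed.

Lemma mv1 j (h : (j < d)%N) : exists m, meas_vec e m = e (Ordinal h).
Proof.
have hm : (j < 3 * d - 2)%N by lia.
exists (Ordinal hm); rewrite /meas_vec /= h; exact: insE.
Qed.

Lemma mv2 j (h : (j.+1 < d)%N) :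
  exists m, meas_vec e m = e (Ordinal (ltnW h)) - e (Ordinal h).
Proof.
have hm : (d + j < 3 * d - 2)%N by lia.
exists (Ordinal hm); rewrite /meas_vec /=.
have -> : (d + j < d)%N = false by lia.
have -> : (d + j < 2 * d - 1)%N = true by lia.
have -> : (d + j - d)%N = j by lia.
by rewrite (insE _ (ltnW h)) (insE _ h).
Qed.

Lemma mv3 j (h : (j.+1 < d)%N) :
  exists m, meas_vec e m = e (Ordinal (ltnW h)) - 'i *: e (Ordinal h).
Proof.
have hm : (2 * d - 1 + j < 3 * d - 2)%N by lia.
exists (Ordinal hm); rewrite /meas_vec /=.
have -> : (2 * d - 1 + j < d)%N = false by lia.
have -> : (2 * d - 1 + j < 2 * d - 1)%N = false by lia.
have -> : (2 * d - 1 + j - (2 * d - 1))%N = j by lia.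
by rewrite (insE _ (ltnW h)) (insE _ h).
Qed.

Lemma meq (x x' : 'cV[R[i]]_d) m : meas_map e x = meas_map e x' ->
  cinner x (meas_vec e m) * (cinner x (meas_vec e m))^* =
  cinner x' (meas_vec e m) * (cinner x' (meas_vec e m))^*.
Proof.
move=> H; have := congr1 (fun M : 'cV[R]_(3 * d - 2) => M m 0) H; rewrite /= !mxE -!sqmodC => -> //.
Qed.
End P.

Section Ph.
Variable C : numClosedFieldType.
Lemma phase1 (z : C) : z != 0 -> (z^* / `|z|) * (z^* / `|z|)^* = 1.
Proof.
move=> z0; have nz : `|z| != 0 by rewrite normr_eq0.
have cn : (`|z|^-1)^* = `|z|^-1 by rewrite -normfV conj_normC.
rewrite cM cn conjCK mulrACA -normCKC -invfM -expr2.
by rewrite divff // expf_neq0.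
Qed.

Lemma phase0 (z : C) : z != 0 -> (z^* / `|z|) * z = `|z|.
Proof.
move=> z0; have nz : `|z| != 0 by rewrite normr_eq0.
by rewrite mulrAC -normCKC expr2 mulfK.
Qed.

Lemma phaseM (p a b : C) : (p * a) * (p * b)^* = (p * p^*) * (a * b^*).
Proof. by rewrite cM mulrACA. Qed.
End Ph.

Section Q.
Variable R : rcfType.
Variable d : nat.
Hypothesis hd : (1 <= d)%N.
Variable e : 'I_d -> 'cV[R[i]]_d.
Hypothesis he : orthonormal_basis e.

Lemma uniq_y (x x' : 'cV[R[i]]_d) : full e x -> full e x' ->
  meas_map e x = meas_map e x' ->
  (cinner (e (Ordinal hd)) x / `|cinner (e (Ordinal hd)) x|) *: x =
  (cinner (e (Ordinal hd)) x' / `|cinner (e (Ordinal hd)) x'|) *: x'.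
Proof.
move=> fx fx' hm.
rewrite [cinner (e _) x]cinnerC [cinner (e _) x']cinnerC !norm_conjC.
set p := _ / _; set p' := _ / _.
have pp : p * p^* = 1 by exact: (@phase1 _ _ (fx _)).
have pp' : p' * p'^* = 1 by exact: (@phase1 _ _ (fx' _)).
have claim : forall n (h : (n < d)%N),
    p * cinner x (e (Ordinal h)) = p' * cinner x' (e (Ordinal h)).
  elim => [|n IH] h.
    have -> : Ordinal h = Ordinal hd by apply: val_inj.
    rewrite /p /p' !phase0; try by [apply: fx | apply: fx'].
    have [m hmv] := @mv1 _ _ e _ hd.
    have := @meq _ _ e x x' m hm; rewrite hmv -!normCK => /eqP.
    by rewrite eqrXn2 // => /eqP.
  have IHn := IH (ltnW h).
  have [m1 E1] := @mv1 _ _ e _ (ltnW h).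
  have [m2 E2] := @mv1 _ _ e _ h.
  have [m3 E3] := @mv2 _ _ e _ h.
  have [m4 E4] := @mv3 _ _ e _ h.
  have q1 := @meq _ _ e x x' m1 hm; have q2 := @meq _ _ e x x' m2 hm; have q3 := @meq _ _ e x x' m3 hm; have q4 := @meq _ _ e x x' m4 hm.
  rewrite E1 in q1; rewrite E2 in q2.
  rewrite E3 !cinnerBr in q3.
  rewrite E4 !cinnerBr !cinnerZr conjCi !mulNr !opprK in q4.
  have W := @Wlem _ _ _ _ _ q1 q2 q3 q4.
  have Y0 : p * cinner x (e (Ordinal (ltnW h))) != 0.
    rewrite mulf_eq0 negb_or fx andbT.
    by apply/eqP => p0; move: pp; rewrite p0 mul0r => /eqP; rewrite eq_sym oner_eq0.
  have key : (p * cinner x (e (Ordinal (ltnW h)))) * (p * cinner x (e (Ordinal h)))^* =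
             (p * cinner x (e (Ordinal (ltnW h)))) * (p' * cinner x' (e (Ordinal h)))^*.
    by rewrite phaseM pp mul1r W IHn phaseM pp' mul1r.
  by move/(mulfI Y0)/(can_inj conjCK): key.
refine (@recon _ _ e he _ _ _) => j; rewrite !cinnerZl.
by case: j => n hn; apply: claim.
Qed.
End Q.

Theorem mainTheorem2 (R : realType) (d : nat) (hd : (1 <= d)%N)
  (e : 'I_d -> 'cV[R[i]]_d) (he : orthonormal_basis e) :
  exists F : 'cV[R]_(3 * d - 2) -> 'cV[R[i]]_d,
    forall x : 'cV[R[i]]_d, full e x ->
      F (meas_map e x) =
        (cinner (e (Ordinal hd)) x / `|cinner (e (Ordinal hd)) x|) *: x.
Proof.
pose G a := epsilon (inhabits (0 : 'cV[R[i]]_d))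
  (fun x => full e x /\ meas_map e x = a).
exists (fun a => (cinner (e (Ordinal hd)) (G a) / `|cinner (e (Ordinal hd)) (G a)|) *: G a).
move=> x fx /=.
have [f0 m0] : full e (G (meas_map e x)) /\ meas_map e (G (meas_map e x)) = meas_map e x.
  by apply: (epsilon_spec (inhabits (0 : 'cV[R[i]]_d)) (fun y => full e y /\ meas_map e y = meas_map e x)); exists x.
exact: (@uniq_y _ _ hd e he _ _ f0 fx m0).
Qed.
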